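(* Let $(w_t)_{t\in\mathbb{N}_0}$ be mutually independent $\mathbb{R}^d$-valued random vectors with $\mathsf{E}[w_t]=0$, $\mathsf{E}[w_tw_t^{\mathrm T}]=Q_t$, and $\mathsf{E}[\|w_t\|^4]\le C_4$ for all $t$, for some $C_4>0$. Let $C_1:=\sup_t\mathsf{E}[\|w_t\|]$. Fix $r>C_1$ and $x\in\mathbb{R}^d$, and consider the closed-loop random walk $$x_{t+1}=x_t-\operatorname{sat}_r(x_t)+w_t,\qquad x_0=x,$$ with natural filtration $(\mathfrak{F}_t)_{t\in\mathbb{N}_0}$, and set $\xi_t:=\|x_t\|$. Then there exist constants $b>0$ and $J<\infty$ such that for all $t$, $$\mathsf{E}[\xi_{t+1}-\xi_t\mid\mathfrak{F}_t]\le -b\quad\text{on the event }\{\xi_t>J\}.$$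
   Context: For $r>0$, $\operatorname{sat}_r:\mathbb{R}^d\to\{y:\|y\|\le r\}$ is defined by $\operatorname{sat}_r(y)=y$ if $\|y\|\le r$ and $\operatorname{sat}_r(y)=ry/\|y\|$ otherwise (radial, not componentwise, saturation). $\|\cdot\|$ is the Euclidean norm. *)

(* Defs.v *)
From HB Require Import structures.
From mathcomp Require Import all_boot all_order all_algebra.
From mathcomp Require Import all_classical all_reals all_analysis.
Set Implicit Arguments. Unset Strict Implicit. Unset Printing Implicit Defensive.
Import Order.TTheory GRing.Theory Num.Theory.
Local Open Scope classical_set_scope.
Local Open Scope ring_scope.

Definition enorm {R : realType} {d : nat} (v : 'rV[R]_d) : R :=
  Num.sqrt (\sum_(i < d) (v 0 i) ^+ 2).

Definition sat {R : realType} {d : nat} (r : R) (y : 'rV[R]_d) : 'rV[R]_d :=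
  if enorm y <= r then y else (r / enorm y) *: y.

Fixpoint walk {T : Type} {R : realType} {d : nat} (r : R) (x : 'rV[R]_d)
  (w : nat -> T -> 'rV[R]_d) (t : nat) : T -> 'rV[R]_d :=
  match t with
  | 0%N => fun _ => x
  | t'.+1 => fun om => walk r x w t' om - sat r (walk r x w t' om) + w t' om
  end.

Definition rvec_measurable {dT} {T : measurableType dT} {R : realType} {d : nat}
  (X : T -> 'rV[R]_d) : Prop :=
  forall i : 'I_d, measurable_fun setT (fun om => X om 0 i).

(* sigma-algebra generated by the random vectors X s, s in S
   (the Borel sigma-algebra of R^d is generated by the coordinate maps) *)
Definition gen_sigma {dT} {T : measurableType dT} {R : realType} {d : nat}
  (S : set nat) (X : nat -> T -> 'rV[R]_d) : set (set T) :=
  <<s [set A | exists s (i : 'I_d) (B : set R),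
          S s /\ measurable B /\ A = (fun om => X s om 0 i) @^-1` B] >>.

Definition nat_filtration {dT} {T : measurableType dT} {R : realType} {d : nat}
  (X : nat -> T -> 'rV[R]_d) (t : nat) : set (set T) :=
  gen_sigma [set s | (s <= t)%N] X.

Definition mutually_independent {dT} {T : measurableType dT} {R : realType}
  {d : nat} (P : probability T R) (X : nat -> T -> 'rV[R]_d) : Prop :=
  forall (S : seq nat) (A : nat -> set T), uniq S ->
    (forall t, t \in S -> gen_sigma [set t] X (A t)) ->
    P (\bigcap_(t in [set t | t \in S]) A t) = (\prod_(t <- S) P (A t))%E.

Definition is_cond_exp {dT} {T : measurableType dT} {R : realType}
  (P : probability T R) (G : set (set T)) (X Z : T -> R) : Prop :=
  (forall B : set R, measurable B -> G (Z @^-1` B)) /\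
  P.-integrable setT (EFin \o Z) /\
  forall A, G A -> (\int[P]_(om in A) (Z om)%:E = \int[P]_(om in A) (X om)%:E)%E.

(* Main.v *)
Require Import Defs.
From HB Require Import structures.
From mathcomp Require Import all_boot all_order all_algebra.
From mathcomp Require Import all_classical all_reals all_analysis.
From mathcomp Require Import ring lra.
Import measurable_realfun.
Import Order.TTheory GRing.Theory Num.Theory.
Local Open Scope classical_set_scope.
Local Open Scope ring_scope.

Section enorm_lemmas.
Context {R : realType} {d : nat}.
Implicit Types u v : 'rV[R]_d.

Lemma enorm_ge0 v : 0 <= enorm v.
Proof. exact: sqrtr_ge0. Qed.

Lemma sumsq_ge0 v : 0 <= \sum_(i < d) (v 0 i) ^+ 2.
Proof. by apply: sumr_ge0 => i _; exact: sqr_ge0. Qed.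

Lemma enorm_sq v : enorm v ^+ 2 = \sum_(i < d) (v 0 i) ^+ 2.
Proof. by rewrite /enorm sqr_sqrtr // sumsq_ge0. Qed.

Lemma enormZ (a : R) v : enorm (a *: v) = `|a| * enorm v.
Proof.
rewrite /enorm (eq_bigr (fun i => a ^+ 2 * (v 0 i) ^+ 2)); last first.
  by move=> i _; rewrite mxE exprMn.
by rewrite -mulr_sumr sqrtrM ?sqr_ge0 // sqrtr_sqr.
Qed.

Lemma enorm0_coord v : enorm v = 0 -> forall i, v 0 i = 0.
Proof.
move=> h i; have : \sum_(j < d) (v 0 j) ^+ 2 = 0 by rewrite -enorm_sq h expr0n.
move/eqP; rewrite psumr_eq0; last by move=> j _; exact: sqr_ge0.
by move/allP => /(_ i (mem_index_enum _)) /=; rewrite sqrf_eq0 => /eqP.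
Qed.

Lemma cauchy_schwarz u v :
  \sum_(i < d) u 0 i * v 0 i <= enorm u * enorm v.
Proof.
set a := enorm u; set b := enorm v.
have [a0|a0] := eqVneq a 0.
  rewrite a0 mul0r big1 // => i _; by rewrite (enorm0_coord _ a0) mul0r.
have [b0|b0] := eqVneq b 0.
  rewrite b0 mulr0 big1 // => i _; by rewrite (enorm0_coord _ b0) mulr0.
have ha : 0 < a by rewrite lt0r a0 enorm_ge0.
have hb : 0 < b by rewrite lt0r b0 enorm_ge0.
have key : 2 * (a * b) * \sum_(i < d) u 0 i * v 0 i <= 2 * (a * b) * (a * b).
  have e : 2 * (a * b) * (a * b) =
      \sum_(i < d) ((b * u 0 i) ^+ 2 + (a * v 0 i) ^+ 2).
    rewrite big_split /=; under eq_bigr do rewrite exprMn.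
    under [X in _ = _ + X]eq_bigr do rewrite exprMn.
    rewrite -!mulr_sumr -!enorm_sq -/a -/b; ring.
  rewrite e mulr_sumr; apply: ler_sum => i _.
  have := sqr_ge0 (b * u 0 i - a * v 0 i); nra.
have hab : 0 < 2 * (a * b) by apply: mulr_gt0 => //; exact: mulr_gt0.
by rewrite -(ler_pM2l hab).
Qed.

Lemma enormD u v : enorm (u + v) <= enorm u + enorm v.
Proof.
have h0 : 0 <= enorm u + enorm v by apply: addr_ge0; exact: enorm_ge0.
rewrite -(ler_pXn2r (isT : (0 < 2)%N)) ?nnegrE ?enorm_ge0 //.
rewrite enorm_sq (eq_bigr (fun i => (u 0 i) ^+ 2 + (v 0 i) ^+ 2 + 2 * (u 0 i * v 0 i)));
  last by move=> i _; rewrite mxE; ring.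
rewrite !big_split /= -mulr_sumr -!enorm_sq.
have := cauchy_schwarz u v; nra.
Qed.

End enorm_lemmas.

Section sat_lemmas.
Context {R : realType} {d : nat} (r : R) (hr : 0 <= r).
Implicit Types y : 'rV[R]_d.

Lemma enorm0 : enorm (0 : 'rV[R]_d) = 0.
Proof. by rewrite -(scale0r (0 : 'rV[R]_d)) enormZ normr0 mul0r. Qed.

Lemma sat_far y : r < enorm y -> enorm (y - sat r y) = enorm y - r.
Proof.
move=> h; have e0 : 0 < enorm y by exact: le_lt_trans h.
rewrite /sat leNgt h /= -{1}(scale1r y) -scalerBl enormZ.
have -> : `|1 - r / enorm y| = 1 - r / enorm y.
  apply: ger0_norm; rewrite subr_ge0 ler_pdivrMr // mul1r; exact: ltW.
by rewrite mulrBl mul1r mulfVK // gt_eqF.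
Qed.

Lemma sat_le y : enorm (y - sat r y) <= enorm y.
Proof.
case: (leP (enorm y) r) => h.
  by rewrite /sat h subrr enorm0 enorm_ge0.
by rewrite sat_far // lerBlDr lerDl.
Qed.
End sat_lemmas.

Lemma inv_meas (R : realType) : measurable_fun setT (@GRing.inv R).
Proof.
have -> : [set: R] = ~` [set 0] `|` [set 0] by rewrite setvU.
apply/measurable_funU.
- by apply: measurableC; exact: measurable_set1.
- exact: measurable_set1.
split; last exact: measurable_fun_set1.
apply: measurable_realfun.open_continuous_measurable_fun.
  apply/closed_openC/accessible_closed_set1; exact: hausdorff_accessible.
by move=> x /set_mem /eqP x0; exact: inv_continuous.
Qed.

Section measurability.
Context {dd} {T' : measurableType dd} {R : realType} {d : nat}.
Implicit Types y z : T' -> 'rV[R]_d.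

Definition cmeas y := forall i : 'I_d, measurable_fun setT (fun om => y om 0 i).

Lemma measurable_enorm y : cmeas y -> measurable_fun setT (fun om => enorm (y om)).
Proof.
move=> hy; rewrite /enorm.
apply: (measurableT_comp (measurable_realfun.continuous_measurable_fun (@sqrt_continuous R))).
apply: measurable_sum => i; apply: measurable_realfun.measurable_funX; exact: hy.
Qed.

Lemma cmeas_sat (r : R) y : cmeas y -> cmeas (fun om => sat r (y om)).
Proof.
move=> hy i; rewrite /sat.
have -> : (fun om => (if enorm (y om) <= r then y om else (r / enorm (y om)) *: y om) 0 i)
   = (fun om => if enorm (y om) <= r then y om 0 i else (r / enorm (y om)) * y om 0 i).
  by apply/funext => om; case: ifP => //; rewrite mxE.
apply: measurable_fun_ifT.
- apply: measurable_fun_ler; [exact: measurable_enorm|exact: measurable_cst].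
- exact: hy.
- apply: measurable_funM => //; apply: measurable_funM; first exact: measurable_cst.
  apply: measurableT_comp; last exact: measurable_enorm.
  exact: inv_meas.
Qed.

Lemma cmeas_step (r : R) y z : cmeas y -> cmeas z ->
  cmeas (fun om => y om - sat r (y om) + z om).
Proof.
move=> hy hz i.
have -> : (fun om => (y om - sat r (y om) + z om) 0 i)
  = (fun om => y om 0 i - sat r (y om) 0 i + z om 0 i).
  by apply/funext => om; rewrite !mxE.
apply: measurable_funD => //; apply: measurable_funB => //; exact: cmeas_sat.
Qed.

Lemma cmeas_walk (r : R) x (w : nat -> T' -> 'rV[R]_d) t :
  (forall s, (s < t)%N -> cmeas (w s)) -> forall s, (s <= t)%N -> cmeas (walk r x w s).
Proof.
move=> hw; elim=> [|s ih] hs /=.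
  by move=> i; exact: measurable_cst.
apply: cmeas_step; first by apply: ih; exact: ltnW.
exact: hw.
Qed.
End measurability.


Section transport.
Context dT (T : measurableType dT) (R : realType) (G : set (set T)).
Hypothesis GT : G `<=` measurable.
Local Notation TG := (g_sigma_algebraType G).

Lemma sigmaG_meas : <<s G >> `<=` measurable.
Proof. exact: smallest_sub (@sigma_algebra_measurable _ T) GT. Qed.

Variable mu : {measure set T -> \bar R}.
Definition trm : set TG -> \bar R := fun A => mu A.

Let trm0 : trm set0 = 0%E. Proof. exact: measure0. Qed.
Let trm_ge0 A : (0 <= trm A)%E. Proof. exact: measure_ge0. Qed.
Let trm_sa : semi_sigma_additive trm.
Proof.
move=> F mF tF mU; apply: (@measure_semi_sigma_additive _ _ _ mu) => //.
- by move=> n; apply: sigmaG_meas; exact: mF.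
- exact: sigmaG_meas.
Qed.
HB.instance Definition _ := isMeasure.Build _ TG R trm trm0 trm_ge0 trm_sa.
End transport.

Section indep_sigma.
Context dT (T : measurableType dT) (R : realType) (P : probability T R).
Variables (G : set (set T)) (GT : G `<=` measurable) (setIG : setI_closed G) (GsetT : G setT).
Variables (E : set T) (mE : measurable E).
Hypothesis hind : forall A, G A -> P (A `&` E) = (P A * P E)%E.

Lemma indep_sigma A : <<s G >> A -> P (A `&` E) = (P A * P E)%E.
Proof.
move=> GA.
have k0 : (0 <= fine (P E))%R by apply: fine_ge0; exact: measure_ge0.
pose k := NngNum k0.
have PEf : P E = (fine (P E))%:E by rewrite fineK // fin_num_measure.
pose m1 := @trm _ _ _ G (mrestr P mE).
pose m2 := @trm _ _ _ G (mscale k P).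
have := @measure_unique _ R (g_sigma_algebraType G) G (fun _ => setT) erefl setIG
  (fun _ => GsetT) _ m1 m2.
move=> /(_ _ GT GT) H.
have h1 : \bigcup_(i in [set: nat]) ([set: g_sigma_algebraType G]) = setT by rewrite bigcup_const.
have h2 : forall B, G B -> m1 B = m2 B.
  by move=> B GB; rewrite /m1 /m2 /trm /= /mrestr /mscale /= -PEf muleC; exact: hind.
have h3 : nat -> (m1 setT < +oo)%E.
  move=> _; rewrite /m1 /trm /= /mrestr setTI.
  by apply: (le_lt_trans (probability_le1 P mE)); exact: ltry.
have := H h1 h2 h3 A GA.
rewrite /m1 /m2 /trm /= /mrestr /mscale /= -PEf muleC; apply.
Qed.
End indep_sigma.

Section indep_integral.
Context dT (T : measurableType dT) (R : realType) (P : probability T R).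
Variables (A : set T) (mA : measurable A) (n : T -> R).
Hypothesis mn : measurable_fun setT n.
Hypothesis n0 : forall x, (0 <= n x)%R.
Hypothesis hind : forall B, measurable B -> P (n @^-1` B `&` A) = (P A * P (n @^-1` B))%E.

Lemma integral_restr_A :
  (\int[P]_(x in A) (n x)%:E = \int[mrestr P mA]_x (n x)%:E)%E.
Proof.
have mnE : measurable_fun setT (EFin \o n) by exact/measurable_EFinP.
rewrite -(setUv A) (ge0_integral_setU _ mA (measurableC mA)); last 3 first.
- by rewrite setUv.
- by move=> x _; rewrite lee_fin.
- by rewrite disj_set2E setICr.
have h0 : (\int[mrestr P mA]_(x in ~` A) (n x)%:E = 0)%E.
  apply: null_set_integral; first exact: measurableC.
    exact: measurable_funS mnE.
  by rewrite /= /mrestr setICl measure0.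
rewrite h0 adde0; apply: eq_measure_integral => S mS SA.
by change (P S = P (S `&` A)); rewrite setIidl.
Qed.

Lemma indep_integral :
  (\int[P]_(x in A) (n x)%:E = P A * \int[P]_x (n x)%:E)%E.
Proof.
have k0 : (0 <= fine (P A))%R by apply: fine_ge0; exact: measure_ge0.
pose k := NngNum k0.
have PAf : P A = (fine (P A))%:E by rewrite fineK // fin_num_measure.
pose nm := isMeasurableFun.Build _ _ _ _ _ mn.
pose nf : {mfun T >-> R} := HB.pack n nm.
rewrite integral_restr_A.
pose f := fun y : R => (`|y|)%:E.
have mEF : measurable_fun (setT : set R) f.
  by apply/measurable_EFinP; exact: normr_measurable.
have f0 : {in setT, forall y, (0 <= f y)%E} by move=> y _; rewrite lee_fin.
have fn : forall x, (f \o n) x = (n x)%:E by move=> x; rewrite /f /= ger0_norm.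
have e1 := @ge0_integral_pushforward _ _ _ _ R n mn (mrestr P mA) setT f
  measurableT mEF f0.
rewrite preimage_setT (eq_integral (fun x => (n x)%:E)) in e1; last by move=> x _; exact: fn.
rewrite -e1.
rewrite (eq_measure_integral (mscale k (distribution P nf))); last first.
  move=> B mB _; change (P (n @^-1` B `&` A) = (fine (P A))%:E * P (n @^-1` B))%E; rewrite -PAf hind //.
rewrite ge0_integral_mscale //; last by move=> x _; rewrite lee_fin.
rewrite -PAf /distribution /=.
have e2 := @ge0_integral_pushforward _ _ _ _ R n mn P setT f
  measurableT mEF f0.
rewrite preimage_setT (eq_integral (fun x => (n x)%:E)) in e2; last by move=> x _; exact: fn.
by rewrite e2.
Qed.
End indep_integral.


Definition gset {dT} {T : measurableType dT} {R : realType} {d : nat}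
  (S : set nat) (X : nat -> T -> 'rV[R]_d) : set (set T) :=
  [set A | exists s (i : 'I_d) (B : set R),
          S s /\ measurable B /\ A = (fun om => X s om 0 i) @^-1` B].

Section gen.
Context dT (T : measurableType dT) (R : realType) (d : nat).
Variables (X : nat -> T -> 'rV[R]_d).

Lemma gen_sigmaE S : gen_sigma S X = <<s gset S X >>.
Proof. by []. Qed.

Lemma cmeas_gen S s : S s -> @cmeas _ (g_sigma_algebraType (gset S X)) R d (X s).
Proof.
move=> Ss i _ B mB; rewrite setTI; apply: sub_sigma_algebra.
by exists s, i, B.
Qed.

Lemma gset_meas S : (forall s, rvec_measurable (X s)) -> gset S X `<=` measurable.
Proof.
move=> hX A [s [i [B [_ [mB ->]]]]].
by rewrite -(setTI (_ @^-1` _)); exact: hX.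
Qed.

Lemma gen_meas S : (forall s, rvec_measurable (X s)) -> gen_sigma S X `<=` measurable.
Proof. by move=> hX; apply: sigmaG_meas; exact: gset_meas. Qed.
End gen.

Section pi.
Context dT (T : measurableType dT) (R : realType) (d : nat) (P : probability T R).
Variables (w : nat -> T -> 'rV[R]_d).
Hypothesis hw : forall t, rvec_measurable (w t).
Hypothesis hind : mutually_independent P w.

Definition Pi t : set (set T) := [set A | exists As : nat -> set T,
  (forall s, (s < t)%N -> gen_sigma [set s] w (As s)) /\
  A = \bigcap_(s in [set s | (s < t)%N]) As s].

Lemma gen_T s : gen_sigma [set s] w setT.
Proof. exact: (@measurableT _ (g_sigma_algebraType (gset [set s] w))). Qed.

Lemma gen_I s A B : gen_sigma [set s] w A -> gen_sigma [set s] w B ->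
  gen_sigma [set s] w (A `&` B).
Proof. exact: (@measurableI _ (g_sigma_algebraType (gset [set s] w))). Qed.

Lemma Pi_setT t : Pi t setT.
Proof.
exists (fun _ => setT); split => [s _|]; first exact: gen_T.
by apply/seteqP; split => om.
Qed.

Lemma Pi_setI t : setI_closed (Pi t).
Proof.
move=> A B [As [hA ->]] [Bs [hB ->]].
exists (fun s => As s `&` Bs s); split => [s st|]; first exact: gen_I (hA s st) (hB s st).
apply/seteqP; split => om /=.
  by move=> [h1 h2] s st; split; [exact: h1|exact: h2].
by move=> h; split => s st; have [] := h s st.
Qed.

Lemma Pi_meas t : Pi t `<=` measurable.
Proof.
move=> A [As [hA ->]]; apply: bigcap_measurableType => s st.
exact: gen_meas (hA s st).
Qed.

Lemma Pi_prod t As E : (forall s, (s < t)%N -> gen_sigma [set s] w (As s)) ->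
  gen_sigma [set t] w E ->
  P ((\bigcap_(s in [set s | (s < t)%N]) As s) `&` E) =
  (\prod_(0 <= s < t) P (As s) * P E)%E.
Proof.
move=> hA hE.
pose A' := fun s => if s == t then E else As s.
have := hind (iota 0 t.+1) A' (iota_uniq 0 t.+1).
have hA' : forall s, s \in iota 0 t.+1 -> gen_sigma [set s] w (A' s).
  move=> s; rewrite mem_iota add0n /= ltnS leq_eqVlt => /orP[/eqP ->|st].
    by rewrite /A' eqxx.
  by rewrite /A' (ltn_eqF st); exact: hA.
have eqs : \bigcap_(s in [set s | s \in iota 0 t.+1]) A' s =
    (\bigcap_(s in [set s | (s < t)%N]) As s) `&` E.
  apply/seteqP; split => om.
    move=> h; split.
      move=> s st; have := h s; rewrite /A' (ltn_eqF st); apply.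
      have hs : s \in iota 0 t.+1 by rewrite mem_iota add0n ltnS; exact: ltnW. exact: hs.
    have := h t; rewrite /A' eqxx; apply.
    by have : t \in iota 0 t.+1 by rewrite mem_iota add0n ltnS leqnn.
  move=> [h1 h2] s; change (s \in iota 0 t.+1 -> A' s om).
  move=> hs; have : (s == t) || (s < t)%N.
    by rewrite -leq_eqVlt -ltnS; move: hs; rewrite mem_iota add0n.
  case/orP => [/eqP ->|st].
    by rewrite /A' eqxx.
  by rewrite /A' (ltn_eqF st); exact: h1.
move=> /(_ hA'); rewrite eqs => ->.
- rewrite -[iota 0 t.+1]/(index_iota 0 t.+1) big_nat_recr //= /A' eqxx.
  congr (_ * _)%E; apply: eq_big_nat => s /andP[_ st].
  by rewrite (ltn_eqF st).
Qed.

Lemma Pi_indep t A E : Pi t A -> gen_sigma [set t] w E -> P (A `&` E) = (P A * P E)%E.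
Proof.
move=> [As [hA ->]] hE; rewrite Pi_prod //.
have := @Pi_prod t As setT hA (gen_T t); rewrite setIT probability_setT mule1 => ->.
by [].
Qed.

Lemma sigma_indep t A E : <<s Pi t >> A -> gen_sigma [set t] w E ->
  P (A `&` E) = (P A * P E)%E.
Proof.
move=> hA hE.
apply: (@indep_sigma _ _ _ P (Pi t) (@Pi_meas t) (@Pi_setI t) (Pi_setT t) E
  (@gen_meas _ _ _ _ w _ hw E hE) _ A hA).
by move=> B hB; exact: (@Pi_indep t B E hB hE).
Qed.

Lemma cmeas_w_Pi t s : (s < t)%N -> @cmeas _ (g_sigma_algebraType (Pi t)) R d (w s).
Proof.
move=> st i _ B mB; apply: sub_sigma_algebra.
exists (fun s' => if s' == s then (fun om => w s om 0 i) @^-1` B else setT).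
split.
  move=> s' _; case: eqP => [->|_]; last exact: gen_T.
  by apply: sub_sigma_algebra; exists s, i, B.
apply/seteqP; split => om.
  move=> [_ h] s' s't; case: eqP => // ->; exact: h.
move=> h; split => //; have := h s st; rewrite eqxx; apply.
Qed.

Lemma F_sub_Pi (r : R) x t : nat_filtration (walk r x w) t `<=` <<s Pi t >>.
Proof.
apply: smallest_sub; first exact: smallest_sigma_algebra.
move=> A [s [i [B [st [mB ->]]]]].
have := @cmeas_walk _ (g_sigma_algebraType (Pi t)) R d r x w t
  (fun s' hs => @cmeas_w_Pi t s' hs) s st i measurableT B mB.
by rewrite setTI.
Qed.
End pi.


Lemma int_cst dT (T : measurableType dT) (R : realType) (P : probability T R)
  (A : set T) (mA : measurable A) (k : R) : P.-integrable A (fun _ => k%:E).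
Proof.
apply: (eq_integrable mA _ _ _ (finite_measure_integrable_cst P k mA)).
by [].
Qed.

Theorem lemma2 (dT : measure_display) (T : measurableType dT) (R : realType)
  (P : probability T R) (d : nat)
  (w : nat -> T -> 'rV[R]_d) (Q : nat -> 'M[R]_d) (C4 : R)
  (r : R) (x : 'rV[R]_d) :
  (forall t, rvec_measurable (w t)) ->
  mutually_independent P w ->
  (forall t (i : 'I_d), ('E_P[fun om => w t om ord0 i] = 0)%E) ->
  (forall t (i j : 'I_d),
     ('E_P[fun om => (w t om ord0 i * w t om ord0 j)%R] = (Q t i j)%:E)%E) ->
  0 < C4 ->
  (forall t, 'E_P[fun om => (enorm (w t om) ^+ 4)%R] <= C4%:E)%E ->
  (ereal_sup [set 'E_P[fun om => enorm (w t om)] | t in [set: nat]] < r%:E)%E ->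
  exists b J : R, 0 < b /\
    forall (t : nat) (Z : T -> R),
      is_cond_exp P (nat_filtration (walk r x w) t)
        (fun om => enorm (walk r x w t.+1 om) - enorm (walk r x w t om)) Z ->
      {ae P, forall om, J < enorm (walk r x w t om) -> Z om <= - b}.
Proof.
move=> hw hind _ _ _ _ hsup.
set S := [set _ | _ in _] in hsup.
have Ege0 t : (0 <= 'E_P[fun om => enorm (w t om)])%E.
  by apply: expectation_ge0 => om; exact: enorm_ge0.
have Ele t : ('E_P[fun om => enorm (w t om)] <= ereal_sup S)%E.
  by apply: ereal_sup_ubound; exists t.
have sup0 : (0 <= ereal_sup S)%E := le_trans (Ege0 0%N) (Ele 0%N).
have supf : ereal_sup S \is a fin_num.
  by rewrite ge0_fin_numE // (lt_le_trans hsup) // leey.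
set c := fine (ereal_sup S).
have supE : ereal_sup S = c%:E by rewrite fineK.
have c0 : 0 <= c by rewrite -lee_fin -supE.
have cr : c < r by rewrite -lte_fin -supE.
have r0 : 0 <= r by apply: le_trans c0 (ltW cr).
have Ec t : ('E_P[fun om => enorm (w t om)] <= c%:E)%E by rewrite -supE.
exists ((r - c) / 2), r; split; first by rewrite divr_gt0 // subr_gt0.
set b := (r - c) / 2.
move=> t Z [hZm [hZint hZeq]].
set xi := fun s om => enorm (walk r x w s om).
set n := fun om => enorm (w t om).
have cw s : cmeas (walk r x w s).
  by apply: (@cmeas_walk _ T R d r x w s) => // s' _; exact: hw.
have mxi s : measurable_fun setT (xi s) by exact: measurable_enorm.
have mns s : measurable_fun setT (fun om => enorm (w s om)).
  by apply: measurable_enorm; exact: hw.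
have mn : measurable_fun setT n by exact: mns.
set A := [set om | r < xi t om] `&` [set om | - b < Z om].
have FA : nat_filtration (walk r x w) t A.
  rewrite /nat_filtration gen_sigmaE.
  apply: (@measurableI _ (g_sigma_algebraType (gset [set s | (s <= t)%N] (walk r x w)))).
  - have h := @measurable_enorm _ (g_sigma_algebraType (gset [set s | (s <= t)%N] (walk r x w)))
      R d (walk r x w t) (@cmeas_gen _ _ _ _ (walk r x w) _ t (leqnn t)).
    have := h measurableT _ (measurable_itv `]r, +oo[).
    by rewrite setTI preimage_itvoy.
  - have := hZm _ (measurable_itv `]- b, +oo[).
    by rewrite preimage_itvoy.
have mA : measurable A.
  apply: (@gen_meas _ _ _ _ (walk r x w) [set s | (s <= t)%N]) => //.
have hindA : forall B, measurable B ->
    P (n @^-1` B `&` A) = (P A * P (n @^-1` B))%E.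
  move=> B mB; rewrite setIC.
  apply: (@sigma_indep _ _ _ _ P w hw hind t).
    exact: (@F_sub_Pi _ _ _ _ w r x t).
  rewrite gen_sigmaE.
  have h := @measurable_enorm _ (g_sigma_algebraType (gset [set t] w))
      R d (w t) (@cmeas_gen _ _ _ _ w _ t erefl).
  by have := h measurableT _ mB; rewrite setTI.
have n0 : forall om, 0 <= n om by move=> om; exact: enorm_ge0.
have intA := @indep_integral _ _ _ P A mA n mn n0 hindA.
have int_n s : P.-integrable setT (fun om => (enorm (w s om))%:E).
  apply/integrableP; split; first exact/measurable_EFinP.
  rewrite (eq_integral (fun om => (enorm (w s om))%:E)); last first.
    by move=> om _; rewrite gee0_abs // lee_fin enorm_ge0.
  have := Ec s; rewrite unlock => h.
  exact: le_lt_trans h (ltry c).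
have step s om : xi s.+1 om <= xi s om + enorm (w s om).
  rewrite /xi /=; apply: le_trans (enormD _ _) _.
  by rewrite lerD2r; exact: sat_le.
have int_xi s : P.-integrable setT (fun om => (xi s om)%:E).
  elim: s => [|s ih].
    exact: (@finite_measure_integrable_cst _ _ _ P setT (enorm x) measurableT).
  apply: (@le_integrable _ _ _ P setT measurableT _
     (fun om => (xi s om)%:E + (enorm (w s om))%:E)%E).
  - exact/measurable_EFinP.
  - move=> om _; rewrite -EFinD !gee0_abs ?lee_fin ?enorm_ge0 ?step //.
    by rewrite addr_ge0 // enorm_ge0.
  - exact: integrableD.
have sA : A `<=` setT by [].
have PAf : P A = (fine (P A))%:E by rewrite fineK // fin_num_measure.
set p := fine (P A).
have p0 : 0 <= p by apply: fine_ge0; exact: measure_ge0.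
have En0 : (0 <= \int[P]_om (n om)%:E)%E by have := Ege0 t; rewrite unlock.
have Enc : (\int[P]_om (n om)%:E <= c%:E)%E by have := Ec t; rewrite unlock.
have Enf : (\int[P]_om (n om)%:E)%E \is a fin_num.
  by rewrite ge0_fin_numE // (le_lt_trans Enc) // ltry.
set e := fine (\int[P]_om (n om)%:E).
have EnE : (\int[P]_om (n om)%:E)%E = e%:E by rewrite fineK.
have ec : e <= c by rewrite -lee_fin -EnE.
have I1 := hZeq A FA.
have I2 : ((-b)%:E * P A <= \int[P]_(om in A) (Z om)%:E)%E.
  rewrite -(integral_cst P mA).
  apply: (le_integral mA).
    exact: (finite_measure_integrable_cst P (-b) mA).
  - exact: integrableS hZint.
  - by move=> om /set_mem [_ h] /=; rewrite lee_fin ltW.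
have I3 : (\int[P]_(om in A) (xi t.+1 om - xi t om)%:E <=
    \int[P]_(om in A) ((fun om => (n om)%:E) \- cst r%:E) om)%E.
  apply: (le_integral mA).
  - apply: (integrableS measurableT mA sA).
    apply: (eq_integrable measurableT (fun om => (xi t.+1 om)%:E - (xi t om)%:E)%E).
      by move=> om _; rewrite EFinB.
    exact: integrableB.
  - apply: integrableB => //.
      exact: (integrableS measurableT mA sA (int_n t)).
    exact: (finite_measure_integrable_cst P r mA).
  - move=> om /set_mem [h _] /=; rewrite -EFinB lee_fin.
    have hf := @sat_far R d r r0 (walk r x w t om) h.
    have : xi t.+1 om <= enorm (walk r x w t om - sat r (walk r x w t om)) + n om.
      exact: enormD.
    rewrite hf -/(xi t om); lra.
rewrite integralB // in I3; last 2 first.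
  - exact: (integrableS measurableT mA sA (int_n t)).
  - exact: (finite_measure_integrable_cst P r mA).
rewrite integral_cst // intA -I1 EnE PAf in I3.
rewrite PAf in I2.
have hkey : -b * p <= p * e - r * p.
  rewrite -lee_fin EFinB !EFinM; move: I2 I3; rewrite -/p => h2 h3; apply: (le_trans h2); apply: (le_trans h3); rewrite /p fineK ?fin_num_measure //.
have pz : p = 0.
  apply/eqP; rewrite eq_le p0 andbT.
  have h1 : 0 <= p * (c - e) by apply: mulr_ge0 => //; rewrite subr_ge0.
  have hb2 : b * 2 = r - c by rewrite /b divfK // pnatr_eq0.
  have hb3 : r * p - c * p = 2 * (b * p) by rewrite -mulrBl -hb2; ring.
  have : b * p <= 0 by move: hkey h1 hb3; rewrite mulrBr; lra.
  have b0 : 0 < b by rewrite /b divr_gt0 // subr_gt0.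
  nra.
exists A; split => //.
  by rewrite PAf -/p pz.
move=> om /= h.
case: (ltP r (xi t om)) => h1; last first.
  by exfalso; apply: h => h'; move: h1; rewrite leNgt h'.
split => //; rewrite /= ltNge; apply/negP => h'; apply: h => _; exact: h'.
Qed.
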